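(* For $n\in\{0,1,2,\dots\}$ and real $\Lambda$ with $\Lambda<j_{n,1}^2$, set \[ \sigma^{(\Lambda)}_{(n)}:=\begin{cases}\dfrac{\sqrt{-\Lambda}\,I_n'(\sqrt{-\Lambda})}{I_n(\sqrt{-\Lambda})},&\Lambda<0,\\ n,&\Lambda=0,\\ \dfrac{\sqrt{\Lambda}\,J_n'(\sqrt{\Lambda})}{J_n(\sqrt{\Lambda})},&\Lambda>0.\end{cases} \] Let $0\le n<m$ be integers. Then $\sigma^{(\Lambda)}_{(n)}<\sigma^{(\Lambda)}_{(m)}$ for all $\Lambda<j_{n,1}^2$. Consequently, for all $\Lambda<j_{0,1}^2=\lambda^{\mathrm{Dir}}_1(\mathbb{D})$ the eigenvalues of the Dirichlet-to-Neumann map $\mathcal{D}_\Lambda$ of the unit disk $\mathbb{D}$, listed in non-decreasing order with multiplicity, are $\sigma^{(\Lambda)}_k=\sigma^{(\Lambda)}_{(\lfloor (k+1)/2\rfloor)}$, $k\in\mathbb{N}$.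
   Context: $J_n$ and $I_n$ are the Bessel and modified Bessel functions of the first kind of order $n$; $j_{n,1}$ is the first positive zero of $J_n$, and $j_{n,1}<j_{m,1}$ for $n<m$. For the unit disk $\mathbb{D}\subset\mathbb{R}^2$ and $\Lambda$ not a Dirichlet eigenvalue, the Dirichlet-to-Neumann map $\mathcal{D}_\Lambda$ ($u\mapsto\partial_nU$ with $-\Delta U=\Lambda U$ in $\mathbb{D}$, $U|_{\partial\mathbb{D}}=u$) has eigenvalues $\sigma^{(\Lambda)}_{(0)}$ (simple, constant eigenfunction) and $\sigma^{(\Lambda)}_{(n)}$, $n\ge1$ (double, eigenfunctions $\cos n\theta,\sin n\theta$). *)

(* Defs.v *)
From Stdlib Require Import Reals Lra.
From Coquelicot Require Import Coquelicot.
Open Scope R_scope.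

Definition BesselJ (n : nat) (x : R) : R :=
  Series (fun k : nat =>
    (-1) ^ k / (INR (Factorial.fact k) * INR (Factorial.fact (n + k))) * (x / 2) ^ (2 * k + n)).

Definition BesselI (n : nat) (x : R) : R :=
  Series (fun k : nat =>
    / (INR (Factorial.fact k) * INR (Factorial.fact (n + k))) * (x / 2) ^ (2 * k + n)).

Definition is_first_zero_J (n : nat) (j : R) : Prop :=
  0 < j /\ BesselJ n j = 0 /\ (forall x, 0 < x < j -> BesselJ n x <> 0).

Definition sigma_n (n : nat) (L : R) : R :=
  match total_order_T L 0 with
  | inleft (left _) =>
      sqrt (- L) * Derive (BesselI n) (sqrt (- L)) / BesselI n (sqrt (- L))
  | inleft (right _) => INR n
  | inright _ =>
      sqrt L * Derive (BesselJ n) (sqrt L) / BesselJ n (sqrt L)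
  end.

(* Eigenvalues of the DtN map of the unit disk, labelled by their eigenfunctions:
   label (0,false) <-> constant; (n,false) <-> cos n theta, (n,true) <-> sin n theta, n >= 1. *)
Definition dtn_label_valid (l : nat * bool) : Prop := fst l = 0%nat -> snd l = false.
Definition dtn_eig (L : R) (l : nat * bool) : R := sigma_n (fst l) L.

Definition lists_dtn_eigenvalues (L : R) (s : nat -> R) : Prop :=
  (forall k, s k <= s (S k)) /\
  exists f : nat -> nat * bool,
    (forall k, dtn_label_valid (f k)) /\
    (forall k1 k2, f k1 = f k2 -> k1 = k2) /\
    (forall l, dtn_label_valid l -> exists k, f k = l) /\
    (forall k, s k = dtn_eig L (f k)).

(* Main.v *)
Require Import Defs.
From Stdlib Require Import Reals Lra Lia.
From Coquelicot Require Import Coquelicot.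
Open Scope R_scope.

Definition bc (n k : nat) : R := (-1)^k / (INR (Factorial.fact k) * INR (Factorial.fact (n + k))).
Definition F n := PSeries (bc n).
Definition F1 n := PSeries (PS_derive (bc n)).
Definition F2 n := PSeries (PS_derive (PS_derive (bc n))).

Lemma fact_pos k : 0 < INR (Factorial.fact k).
Proof. apply lt_0_INR, Factorial.lt_O_fact. Qed.

Lemma bc_S n k : bc n (S k) = - bc n k / (INR (S k) * INR (S (n + k))).
Proof.
  unfold bc. rewrite Nat.add_succ_r. rewrite (fact_simpl k), (fact_simpl (n+k)).
  rewrite !mult_INR. change ((-1)^(S k)) with (-1 * (-1)^k).
  pose proof (fact_pos k). pose proof (fact_pos (n+k)).
  assert (0 < INR (S k)) by (apply lt_0_INR; lia).
  assert (0 < INR (S (n+k))) by (apply lt_0_INR; lia).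
  field. lra.
Qed.

Lemma bc_neq n k : bc n k <> 0.
Proof.
  unfold bc. pose proof (fact_pos k). pose proof (fact_pos (n+k)).
  apply Rmult_integral_contrapositive_currified.
  apply pow_nonzero; lra.
  apply Rinv_neq_0_compat. apply Rmult_integral_contrapositive_currified; lra.
Qed.

Lemma CV_bc n : CV_radius (bc n) = p_infty.
Proof.
  apply CV_radius_infinite_DAlembert. apply bc_neq.
  apply is_lim_seq_le_le with (u := fun _ => 0) (w := fun k => / INR (S k)).
  - intro k. rewrite bc_S.
    assert (0 < INR (S k)) by (apply lt_0_INR; lia).
    assert (1 <= INR (S (n+k))) by (apply (le_INR 1); lia).
    pose proof (bc_neq n k).
    replace (- bc n k / (INR (S k) * INR (S (n + k))) / bc n k)
      with (- / (INR (S k) * INR (S (n + k)))) by (field; lra).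
    rewrite Rabs_Ropp, Rabs_right.
    2: { apply Rle_ge, Rlt_le, Rinv_0_lt_compat; nra. }
    split. apply Rlt_le, Rinv_0_lt_compat; nra.
    apply Rinv_le_contravar; nra.
  - apply is_lim_seq_const.
  - replace (Finite 0) with (Rbar_inv p_infty) by reflexivity.
    apply is_lim_seq_inv. 2: discriminate.
    apply (is_lim_seq_incr_1 INR). apply is_lim_seq_INR.
Qed.

Lemma inside n x : Rbar_lt (Rabs x) (CV_radius (bc n)).
Proof. rewrite CV_bc. exact I. Qed.
Lemma inside1 n x : Rbar_lt (Rabs x) (CV_radius (PS_derive (bc n))).
Proof. rewrite CV_radius_derive, CV_bc. exact I. Qed.

Lemma F_deriv n x : is_derive (F n) x (F1 n x).
Proof. apply is_derive_PSeries, inside. Qed.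
Lemma F1_deriv n x : is_derive (F1 n) x (F2 n x).
Proof. apply is_derive_PSeries, inside1. Qed.
Lemma F_cont n x : continuity_pt (F n) x.
Proof. apply PSeries_continuity, inside. Qed.
Lemma F1_cont n x : continuity_pt (F1 n) x.
Proof. apply PSeries_continuity, inside1. Qed.

Lemma inside2 n x : Rbar_lt (Rabs x) (CV_radius (PS_derive (PS_derive (bc n)))).
Proof. rewrite !CV_radius_derive, CV_bc. exact I. Qed.

Lemma F_ode n z : z * F2 n z + INR (S n) * F1 n z + F n z = 0.
Proof.
  unfold F, F1, F2.
  rewrite <- PSeries_incr_1, <- PSeries_scal.
  rewrite <- PSeries_plus, <- PSeries_plus.
  - rewrite <- (PSeries_const_0 z). apply PSeries_ext. intro k.
    unfold PS_plus, PS_scal, PS_incr_1, PS_derive.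
    destruct k as [|j].
    + rewrite bc_S. rewrite Nat.add_0_r.
      pose proof (pos_INR n). assert (HS : 0 < INR (S n)) by (rewrite S_INR; lra).
      set (N := INR (S n)) in *. change (INR 1) with 1. set (b0 := bc n 0).
      simpl. unfold plus, scal, zero; simpl; unfold mult; simpl. field; repeat split; apply Rgt_not_eq; lra.
    + rewrite (bc_S n (S j)).
      rewrite Nat.add_succ_r.
      pose proof (pos_INR n). pose proof (pos_INR j).
      assert (E: INR (S (S (n + j))) = INR (S n) + INR (S j)) by (rewrite !S_INR, plus_INR; ring).
      rewrite E.
      assert (HS : 0 < INR (S n)) by (rewrite S_INR; lra).
      assert (HS1 : 0 < INR (S j)) by (rewrite S_INR; lra).
      assert (HS2 : 0 < INR (S (S j))) by (rewrite !S_INR; lra).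
      set (N := INR (S n)) in *. set (A := INR (S j)) in *. set (B := INR (S (S j))) in *. set (b1 := bc n (S j)) in *.
      simpl. unfold plus, scal, zero; simpl; unfold mult; simpl. field; repeat split; apply Rgt_not_eq; lra.
  - apply ex_pseries_plus.
    apply ex_pseries_incr_1. apply CV_radius_inside, inside2.
    apply ex_pseries_scal; [apply Rmult_comm|]. apply CV_radius_inside, inside1.
  - apply CV_radius_inside, inside.
  - apply ex_pseries_incr_1. apply CV_radius_inside, inside2.
  - apply ex_pseries_scal; [apply Rmult_comm|]. apply CV_radius_inside, inside1.
Qed.

Lemma J_eq n x : BesselJ n x = (x/2)^n * F n (x^2/4).
Proof.
  unfold BesselJ, F, PSeries. rewrite <- Series_scal_l. apply Series_ext. intro k.
  unfold bc. rewrite pow_add, pow_mult.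
  replace ((x/2)^2) with (x^2/4) by field. field.
  pose proof (fact_pos k). pose proof (fact_pos (n+k)). split; apply Rgt_not_eq; lra.
Qed.

Lemma I_eq n x : BesselI n x = (x/2)^n * F n (-(x^2/4)).
Proof.
  unfold BesselI, F, PSeries. rewrite <- Series_scal_l. apply Series_ext. intro k.
  unfold bc. rewrite pow_add, pow_mult.
  replace ((x/2)^2) with (x^2/4) by field.
  replace (-(x^2/4)) with ((-1)*(x^2/4)) by ring. rewrite Rpow_mult_distr.
  assert (E : (-1)^k * (-1)^k = 1) by (rewrite <- Rpow_mult_distr; replace (-1 * -1) with 1 by ring; apply pow1).
  pose proof (fact_pos k). pose proof (fact_pos (n+k)).
  field_simplify. 2,3: split; apply Rgt_not_eq; lra.
  replace (((-1)^k)^2) with 1 by (rewrite <- E; ring). field; split; apply Rgt_not_eq; lra.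
Qed.

Lemma pow_half_deriv n (x : R) : is_derive (fun x : R => (x/2)^n) x (INR n * (x/2)^(pred n) * /2).
Proof.
  auto_derive. auto. unfold Rdiv. ring.
Qed.

Lemma Fsq_deriv n (c x : R) : is_derive (fun x : R => F n (c * x^2/4)) x (F1 n (c*x^2/4) * (c*x/2)).
Proof.
  assert (H := is_derive_comp (F n) (fun x : R => c * x^2/4) x (F1 n (c*x^2/4)) (c*x/2)).
  replace (F1 n (c*x^2/4) * (c*x/2)) with (scal (c*x/2) (F1 n (c*x^2/4))).
  apply H. apply F_deriv. auto_derive. auto. field.
  unfold scal; simpl; unfold mult; simpl. ring.
Qed.

Lemma prod_deriv n (c x : R) : is_derive (fun x : R => (x/2)^n * F n (c*x^2/4)) x
  (INR n * (x/2)^(pred n) * /2 * F n (c*x^2/4) + (x/2)^n * (F1 n (c*x^2/4)*(c*x/2))).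
Proof.
  apply (is_derive_mult (fun x : R => (x/2)^n) (fun x : R => F n (c*x^2/4))).
  apply pow_half_deriv. apply Fsq_deriv. intros; apply Rmult_comm.
Qed.

Lemma key_alg n (c x : R) : x <> 0 -> F n (c*x^2/4) <> 0 ->
  x * (INR n * (x/2)^(pred n) * /2 * F n (c*x^2/4) + (x/2)^n * (F1 n (c*x^2/4)*(c*x/2)))
   / ((x/2)^n * F n (c*x^2/4))
  = INR n + 2 * (c*x^2/4) * F1 n (c*x^2/4) / F n (c*x^2/4).
Proof.
  intros Hx HF. set (z := c*x^2/4) in *.
  assert (Hp : (x/2)^n <> 0) by (apply pow_nonzero; lra).
  destruct n as [|n].
  - simpl. unfold z. field. auto.
  - simpl pred. simpl pow. simpl pow in Hp. rewrite S_INR. unfold z. field.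
    split; auto. split; auto.
    intro E. apply Hp. rewrite E. ring.
Qed.

Lemma sigma_eq n L : F n (L/4) <> 0 -> sigma_n n L = INR n + 2*(L/4)*F1 n (L/4)/F n (L/4).
Proof.
  intro HF. unfold sigma_n.
  destruct (total_order_T L 0) as [[Hl|He]|Hg].
  - set (x := sqrt (-L)).
    assert (Hx : 0 < x) by (apply sqrt_lt_R0; lra).
    assert (Hx2 : x^2 = -L) by (unfold x; rewrite <- Rsqr_pow2; apply Rsqr_sqrt; lra).
    assert (Hz : L/4 = (-1)*x^2/4) by (rewrite Hx2; field).
    rewrite Hz in HF |- *.
    rewrite (Derive_ext (BesselI n) (fun x : R => (x/2)^n * F n ((-1)*x^2/4))).
    2: { intro t. rewrite I_eq. f_equal. f_equal. field. }
    rewrite (is_derive_unique _ _ _ (prod_deriv n (-1) x)).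
    rewrite I_eq. replace (-(x^2/4)) with ((-1)*x^2/4) by field.
    apply key_alg; lra.
  - subst L. replace (0/4) with 0 by field. rewrite Rmult_0_r, Rmult_0_l. unfold Rdiv. ring.
  - set (x := sqrt L).
    assert (Hx : 0 < x) by (apply sqrt_lt_R0; lra).
    assert (Hx2 : x^2 = L) by (unfold x; rewrite <- Rsqr_pow2; apply Rsqr_sqrt; lra).
    assert (Hz : L/4 = 1*x^2/4) by (rewrite Hx2; field).
    rewrite Hz in HF |- *.
    rewrite (Derive_ext (BesselJ n) (fun x : R => (x/2)^n * F n (1*x^2/4))).
    2: { intro t. rewrite J_eq. f_equal. f_equal. field. }
    rewrite (is_derive_unique _ _ _ (prod_deriv n 1 x)).
    rewrite J_eq. replace (x^2/4) with (1*x^2/4) by field.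
    apply key_alg; lra.
Qed.

Lemma cont_delta f x eps : continuity_pt f x -> 0 < eps ->
  exists d, 0 < d /\ forall y, Rabs (y - x) < d -> Rabs (f y - f x) < eps.
Proof.
  intros H He. destruct (proj1 (continuity_pt_locally f x) H (mkposreal eps He)) as [d Hd].
  exists d. split. apply cond_pos. intros y Hy. apply (Hd y). exact Hy.
Qed.

Lemma first_zero (f : R -> R) a b : a < b -> (forall x, continuity_pt f x) ->
  0 < f a -> f b <= 0 ->
  exists c, a < c <= b /\ f c = 0 /\ forall x, a <= x < c -> 0 < f x.
Proof.
  intros Hab Hc Ha Hb.
  set (E := fun y => a <= y <= b /\ forall x, a <= x <= y -> 0 < f x).
  assert (HE : exists x, E x).
  { exists a. split. lra. intros x Hx. replace x with a by lra. exact Ha. }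
  assert (HB : bound E). { exists b. intros y [Hy _]. lra. }
  destruct (completeness E HB HE) as [c [Hub Hlub]].
  assert (Hac : a <= c) by (apply Hub; destruct HE as [y Hy]; unfold E; split; [lra|]; intros x Hx; replace x with a by lra; exact Ha).
  assert (Hcb : c <= b). { apply Hlub. intros y [Hy _]. lra. }
  assert (Hi : forall x, a <= x < c -> 0 < f x).
  { intros x Hx. destruct (Rlt_le_dec 0 (f x)) as [h|h]; auto.
    exfalso. assert (c <= x).
    { apply Hlub. intros y [Hy1 Hy2]. destruct (Rle_lt_dec x y) as [h2|h2].
      - specialize (Hy2 x ltac:(lra)). lra.
      - lra. }
    lra. }
  assert (Hfc : f c = 0).
  { destruct (Rtotal_order (f c) 0) as [Hn|[He|Hp]]; auto; exfalso.
    - destruct (cont_delta f c (- f c) (Hc c) ltac:(lra)) as [d [Hd Hd']].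
      assert (a < c). { destruct (Req_dec a c) as [e|e]; [subst; lra|lra]. }
      set (y := Rmax (c - d/2) a).
      assert (Hy : a <= y < c) by (unfold y; unfold Rmax; destruct (Rle_dec (c-d/2) a); lra).
      specialize (Hi y Hy). assert (Hyc : Rabs (y - c) < d).
      { unfold y, Rmax; destruct (Rle_dec (c-d/2) a); rewrite Rabs_left; lra. }
      specialize (Hd' y Hyc). apply Rabs_def2 in Hd'. lra.
    - destruct (cont_delta f c (f c) (Hc c) ltac:(lra)) as [d [Hd Hd']].
      assert (c < b). { destruct (Req_dec c b) as [e|e]; [subst; lra|lra]. }
      set (y := Rmin (c + d/2) b).
      assert (Hy : c < y <= b) by (unfold y; unfold Rmin; destruct (Rle_dec (c+d/2) b); lra).
      assert (HEy : E y).
      { split. lra. intros x Hx. destruct (Rlt_le_dec x c) as [h|h]. apply Hi; lra.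
        assert (Hxc : Rabs (x - c) < d).
        { rewrite Rabs_right. unfold y, Rmin in Hx; destruct (Rle_dec (c+d/2) b); lra. lra. }
        specialize (Hd' x Hxc). apply Rabs_def2 in Hd'. lra. }
      specialize (Hub y HEy). lra. }
  exists c. split; [|split]; auto.
  split; auto. destruct (Req_dec a c) as [e|e]. subst. lra. lra.
Qed.

Lemma deriv_left g c d r : 0 < r -> is_derive g c d ->
  (forall x, c - r < x < c -> g c < g x) -> d <= 0.
Proof.
  intros Hr Hd Hg. apply is_derive_Reals in Hd.
  destruct (Rle_lt_dec d 0) as [h|h]; auto. exfalso.
  destruct (Hd d h) as [del Hdel].
  pose proof (cond_pos del).
  set (t := - Rmin (del/2) (r/2)).
  assert (Ht : - del < t < 0 /\ - r < t) by (unfold t, Rmin; destruct (Rle_dec (del/2) (r/2)); lra).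
  assert (t <> 0) by lra.
  assert (Rabs t < del) by (rewrite Rabs_left; lra).
  specialize (Hdel t H0 H1). specialize (Hg (c + t) ltac:(lra)).
  set (q := (g (c + t) - g c) / t) in *.
  assert (q * t = g (c+t) - g c) by (unfold q; field; auto).
  assert (q < 0) by nra.
  apply Rabs_def2 in Hdel. lra.
Qed.

Lemma deriv_right g c d r : 0 < r -> is_derive g c d ->
  (forall x, c < x < c + r -> g c < g x) -> 0 <= d.
Proof.
  intros Hr Hd Hg. apply is_derive_Reals in Hd.
  destruct (Rle_lt_dec 0 d) as [h|h]; auto. exfalso.
  destruct (Hd (-d) ltac:(lra)) as [del Hdel].
  pose proof (cond_pos del).
  set (t := Rmin (del/2) (r/2)).
  assert (Ht : 0 < t < del /\ t < r) by (unfold t, Rmin; destruct (Rle_dec (del/2) (r/2)); lra).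
  assert (t <> 0) by lra.
  assert (Rabs t < del) by (rewrite Rabs_right; lra).
  specialize (Hdel t H0 H1). specialize (Hg (c + t) ltac:(lra)).
  set (q := (g (c + t) - g c) / t) in *.
  assert (q * t = g (c+t) - g c) by (unfold q; field; auto).
  assert (q > 0) by nra.
  apply Rabs_def2 in Hdel. lra.
Qed.

Lemma F_at0 n : 0 < F n 0.
Proof.
  unfold F. rewrite PSeries_0. unfold bc. simpl pow. rewrite Nat.add_0_r.
  pose proof (fact_pos 0). pose proof (fact_pos n).
  apply Rmult_lt_0_compat. lra. apply Rinv_0_lt_compat. nra.
Qed.

Lemma F_pos_neg n z : z <= 0 -> 0 < F n z.
Proof.
  intro Hz. unfold F, PSeries.
  assert (Hex : ex_series (fun k => bc n k * z^k)).
  { apply ex_pseries_R. apply CV_radius_inside, inside. }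
  rewrite Series_incr_1; auto.
  assert (Hterm : forall k, 0 <= bc n k * z^k).
  { intro k. unfold bc.
    replace ((-1)^k / (INR (Factorial.fact k) * INR (Factorial.fact (n + k))) * z^k)
      with ((-z)^k / (INR (Factorial.fact k) * INR (Factorial.fact (n + k)))).
    2: { replace (-z) with ((-1)*z) by ring. rewrite Rpow_mult_distr.
         pose proof (fact_pos k). pose proof (fact_pos (n+k)). field. split; apply Rgt_not_eq; lra. }
    pose proof (fact_pos k). pose proof (fact_pos (n+k)).
    apply Rmult_le_pos. apply pow_le; lra. apply Rlt_le, Rinv_0_lt_compat. nra. }
  assert (H0 : 0 < bc n 0 * z^0).
  { simpl pow. rewrite Rmult_1_r. pose proof (F_at0 n). unfold F in H. rewrite PSeries_0 in H. exact H. }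
  assert (0 <= Series (fun k => bc n (S k) * z ^ S k)).
  { replace 0 with (Series (fun _ : nat => 0)).
    apply Series_le. intro k. split. lra. apply Hterm.
    apply (ex_series_incr_1 (fun k => bc n k * z^k)). exact Hex.
    pose proof (PSeries_const_0 0). unfold PSeries in H.
    transitivity (Series (fun k : nat => 0 * 0^k)). apply Series_ext; intro; ring. exact H. }
  lra.
Qed.

Definition Pw m n z := (INR m - INR n) * F m z * F n z + 2 * z * (F1 m z * F n z - F m z * F1 n z).

Lemma Pw_deriv m n z : is_derive (Pw m n) z (- (INR m + INR n) * (F1 m z * F n z - F m z * F1 n z)).
Proof.
  unfold Pw.
  pose proof (F_deriv m z). pose proof (F_deriv n z). pose proof (F1_deriv m z). pose proof (F1_deriv n z).
  pose proof (F_ode m z). pose proof (F_ode n z).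
  auto_derive.
  repeat split; eexists; eassumption.
  change (fun x : R => F m x) with (F m). change (fun x : R => F n x) with (F n).
  change (fun x : R => F1 m x) with (F1 m). change (fun x : R => F1 n x) with (F1 n).
  rewrite (is_derive_unique _ _ _ H), (is_derive_unique _ _ _ H0), (is_derive_unique _ _ _ H1), (is_derive_unique _ _ _ H2).
  match goal with |- ?A = ?B => assert (Z : A - B = 2*F n z*(z*F2 m z + INR (S m) * F1 m z + F m z) - 2*F m z*(z*F2 n z + INR(S n)*F1 n z + F n z)) by (rewrite !S_INR; ring) end.
  rewrite H3, H4 in Z. lra.
Qed.

Lemma cont_of_deriv f x l : is_derive f x l -> continuity_pt f x.
Proof. intro H. apply derivable_continuous_pt. exists l. apply is_derive_Reals. exact H. Qed.

Lemma Pw_cont m n z : continuity_pt (Pw m n) z.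
Proof. eapply cont_of_deriv, Pw_deriv. Qed.

Lemma Pw_at0 m n : (n < m)%nat -> 0 < Pw m n 0.
Proof.
  intro H. unfold Pw. apply lt_INR in H. pose proof (F_at0 m). pose proof (F_at0 n).
  assert (0 < INR m - INR n) by lra.
  replace (2*0*(F1 m 0 * F n 0 - F m 0 * F1 n 0)) with 0 by ring.
  rewrite Rplus_0_r. apply Rmult_lt_0_compat; auto. apply Rmult_lt_0_compat; auto.
Qed.

Lemma Pw_zero_deriv m n c : (n < m)%nat -> Pw m n c = 0 -> 0 < F m c -> 0 < F n c ->
  0 < c * (- (INR m + INR n) * (F1 m c * F n c - F m c * F1 n c)).
Proof.
  intros H HP Hm Hn. unfold Pw in HP. apply lt_INR in H. pose proof (pos_INR n).
  set (W := F1 m c * F n c - F m c * F1 n c) in *.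
  assert (c * W = - (INR m - INR n) * F m c * F n c / 2) by lra.
  replace (c * (- (INR m + INR n) * W)) with (- (INR m + INR n) * (c * W)) by ring.
  rewrite H1. assert (0 < F m c * F n c) by (apply Rmult_lt_0_compat; auto).
  replace (- (INR m + INR n) * (- (INR m - INR n) * F m c * F n c / 2))
    with ((INR m + INR n) * (INR m - INR n) * (F m c * F n c) / 2) by field.
  apply Rmult_lt_0_compat; [|lra]. apply Rmult_lt_0_compat; [|auto]. apply Rmult_lt_0_compat; lra.
Qed.

Lemma Pw_pos_right m n W : (n < m)%nat ->
  (forall z, 0 <= z < W -> 0 < F m z /\ 0 < F n z) ->
  forall z, 0 <= z < W -> 0 < Pw m n z.
Proof.
  intros Hmn HF z Hz. destruct (Rlt_le_dec 0 (Pw m n z)) as [h|h]; auto. exfalso.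
  pose proof (Pw_at0 m n Hmn).
  assert (Hz0 : 0 < z). { destruct (Req_dec z 0) as [e|e]. subst. lra. lra. }
  destruct (first_zero (Pw m n) 0 z Hz0 (Pw_cont m n) H h) as [c [Hc [Hpc Hlt]]].
  assert (Hd := deriv_left (Pw m n) c _ c ltac:(lra) (Pw_deriv m n c)).
  assert (Hle : - (INR m + INR n) * (F1 m c * F n c - F m c * F1 n c) <= 0).
  { apply Hd. intros x Hx. rewrite Hpc. apply Hlt. lra. }
  destruct (HF c ltac:(lra)) as [Hm Hn].
  pose proof (Pw_zero_deriv m n c Hmn Hpc Hm Hn). nra.
Qed.

Lemma Pw_pos_left m n : (n < m)%nat -> forall z, z <= 0 -> 0 < Pw m n z.
Proof.
  intros Hmn z Hz. destruct (Rlt_le_dec 0 (Pw m n z)) as [h|h]; auto. exfalso.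
  pose proof (Pw_at0 m n Hmn).
  assert (Hz0 : 0 < -z). { destruct (Req_dec z 0) as [e|e]. subst. lra. lra. }
  set (g := fun y => Pw m n (-y)).
  assert (Hgc : forall y, continuity_pt g y).
  { intro y. apply (cont_of_deriv g y (-1 * (- (INR m + INR n) * (F1 m (-y) * F n (-y) - F m (-y) * F1 n (-y))))).
    unfold g. apply (is_derive_comp (Pw m n) (fun y => -y)). apply Pw_deriv.
    auto_derive; auto. }
  assert (Hg0 : 0 < g 0) by (unfold g; rewrite Ropp_0; auto).
  assert (Hgz : g (-z) <= 0) by (unfold g; rewrite Ropp_involutive; auto).
  destruct (first_zero g 0 (-z) Hz0 Hgc Hg0 Hgz) as [c [Hc [Hpc Hlt]]].
  unfold g in Hpc, Hlt.
  assert (Hd := deriv_right (Pw m n) (-c) _ c ltac:(lra) (Pw_deriv m n (-c))).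
  assert (Hle : 0 <= - (INR m + INR n) * (F1 m (-c) * F n (-c) - F m (-c) * F1 n (-c))).
  { apply Hd. intros x Hx. rewrite Hpc. replace x with (- - x) by ring. apply Hlt. lra. }
  pose proof (Pw_zero_deriv m n (-c) Hmn Hpc (F_pos_neg m (-c) ltac:(lra)) (F_pos_neg n (-c) ltac:(lra))).
  nra.
Qed.

Lemma Fm_pos m n W : (n < m)%nat -> (forall z, 0 <= z < W -> 0 < F n z) ->
  forall z, 0 <= z < W -> 0 < F m z.
Proof.
  intros Hmn HFn z Hz. destruct (Rlt_le_dec 0 (F m z)) as [h0|h0]; auto. exfalso.
  pose proof (F_at0 m).
  assert (Hz0 : 0 < z). { destruct (Req_dec z 0) as [e|e]. subst. lra. lra. }
  destruct (first_zero (F m) 0 z Hz0 (F_cont m) H h0) as [z1 [Hz1 [HF1 Hlt]]].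
  assert (HP : forall y, 0 <= y < z1 -> 0 < Pw m n y).
  { apply Pw_pos_right; auto. intros y Hy. split. apply Hlt; lra. apply HFn; lra. }
  assert (Hd : F1 m z1 <= 0).
  { apply (deriv_left (F m) z1 _ z1); [lra| apply F_deriv |]. intros x Hx. rewrite HF1. apply Hlt. lra. }
  assert (HFn1 : 0 < F n z1) by (apply HFn; lra).
  assert (HPz1 : Pw m n z1 <= 0).
  { unfold Pw. rewrite HF1. replace ((INR m - INR n) * 0 * F n z1 + 2 * z1 * (F1 m z1 * F n z1 - 0 * F1 n z1))
      with (2 * z1 * F1 m z1 * F n z1) by ring.
    assert (0 <= 2 * z1 * (- F1 m z1) * F n z1).
    { apply Rmult_le_pos. apply Rmult_le_pos; lra. lra. }
    lra. }
  pose proof (lt_INR _ _ Hmn) as Hmn'. pose proof (pos_INR n).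
  set (s := INR m + INR n) in *.
  assert (Hs : 0 < s) by (unfold s; lra).
  set (K := s / z1).
  set (h := fun y => exp (K * y) * Pw m n y).
  set (h' := fun y => exp (K * y) * (K * Pw m n y + - s * (F1 m y * F n y - F m y * F1 n y))).
  assert (Hder : forall c, derivable_pt_lim h c (h' c)).
  { intro c. apply is_derive_Reals. unfold h, h'.
    apply (is_derive_ext (fun y => exp (K * y) * Pw m n y)). reflexivity.
    pose proof (Pw_deriv m n c) as HD.
    auto_derive. exists (- (INR m + INR n) * (F1 m c * F n c - F m c * F1 n c)). exact HD.
    change (fun x : R => Pw m n x) with (Pw m n). rewrite (is_derive_unique _ _ _ HD). unfold s. ring. }
  destruct (MVT_cor2 h h' (z1/2) z1 ltac:(lra) (fun c _ => Hder c)) as [c [Heq Hc]].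
  assert (Hh1 : 0 < h (z1/2)).
  { unfold h. apply Rmult_lt_0_compat. apply exp_pos. apply HP. lra. }
  assert (Hhc : 0 < h' c).
  { unfold h'. apply Rmult_lt_0_compat. apply exp_pos.
    assert (HPc : 0 < Pw m n c) by (apply HP; lra).
    assert (HFmc : 0 < F m c) by (apply Hlt; lra).
    assert (HFnc : 0 < F n c) by (apply HFn; lra).
    assert (HW : 2 * c * (F1 m c * F n c - F m c * F1 n c) = Pw m n c - (INR m - INR n) * F m c * F n c)
      by (unfold Pw; ring).
    assert (E : K * Pw m n c + - s * (F1 m c * F n c - F m c * F1 n c)
       = (s * Pw m n c * (2 * c - z1) + s * (INR m - INR n) * (F m c * F n c) * z1) / (2 * c * z1)).
    { unfold K. apply (Rmult_eq_reg_l (2 * c * z1)). 2: apply Rgt_not_eq; nra.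
      field_simplify. 2,3: lra.
      replace (2 * c * z1 * (s * Pw m n c) / z1) with (2 * c * (s * Pw m n c)) by (field; lra).
      match goal with |- ?A = ?B => assert (Z : A - B = - z1 * s * (2 * c * (F1 m c * F n c - F m c * F1 n c) - (Pw m n c - (INR m - INR n) * F m c * F n c))) by ring end. rewrite HW in Z. lra. }
    rewrite E. apply Rdiv_lt_0_compat. 2: nra.
    apply Rplus_lt_0_compat.
    apply Rmult_lt_0_compat. apply Rmult_lt_0_compat; auto. lra.
    apply Rmult_lt_0_compat; [|lra]. apply Rmult_lt_0_compat; [|apply Rmult_lt_0_compat; auto].
    apply Rmult_lt_0_compat; lra. }
  assert (0 < h z1) by nra.
  unfold h in H1. pose proof (exp_pos (K * z1)). nra.
Qed.

Lemma compare m n W : (n < m)%nat -> (forall z, 0 <= z < W -> 0 < F n z) ->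
  forall L, L/4 < W -> sigma_n n L < sigma_n m L.
Proof.
  intros Hmn HFn L HL. set (z := L/4).
  assert (HFm : forall y, 0 <= y < W -> 0 < F m y) by (apply Fm_pos with n; auto).
  assert (Hpos : 0 < F n z /\ 0 < F m z /\ 0 < Pw m n z).
  { destruct (Rle_lt_dec z 0) as [h|h].
    - split; [|split]. apply F_pos_neg; auto. apply F_pos_neg; auto. apply Pw_pos_left; auto.
    - split; [|split]. apply HFn; unfold z in *; lra. apply HFm; unfold z in *; lra.
      apply (Pw_pos_right m n W). auto. intros y Hy; split; [apply HFm|apply HFn]; auto. unfold z in *; lra. }
  destruct Hpos as [Hn [Hm HP]].
  rewrite (sigma_eq n L), (sigma_eq m L). 2,3: fold z; apply Rgt_not_eq; lra. fold z.
  assert (E : INR m + 2 * z * F1 m z / F m z - (INR n + 2 * z * F1 n z / F n z) = Pw m n z / (F m z * F n z)).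
  { unfold Pw. field. lra. }
  assert (0 < Pw m n z / (F m z * F n z)).
  { apply Rdiv_lt_0_compat; auto. apply Rmult_lt_0_compat; auto. }
  lra.
Qed.

Lemma F_pos_first n jn : is_first_zero_J n jn -> forall z, 0 <= z < jn^2/4 -> 0 < F n z.
Proof.
  intros [Hj [_ Hnz]] z Hz. destruct (Rlt_le_dec 0 (F n z)) as [h|h]; auto. exfalso.
  pose proof (F_at0 n).
  assert (Hz0 : 0 < z). { destruct (Req_dec z 0) as [e|e]. subst. lra. lra. }
  destruct (first_zero (F n) 0 z Hz0 (F_cont n) H h) as [c [Hc [HFc _]]].
  set (x := 2 * sqrt c).
  assert (Hsc : sqrt c * sqrt c = c) by (apply sqrt_sqrt; lra).
  assert (Hs0 : 0 < sqrt c) by (apply sqrt_lt_R0; lra).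
  assert (Hx : 0 < x < jn).
  { unfold x. split. lra. destruct (Rlt_le_dec (2 * sqrt c) jn) as [h1|h1]; auto. exfalso. nra. }
  apply (Hnz x Hx). rewrite J_eq.
  replace (x^2/4) with c by (unfold x; simpl; nra).
  rewrite HFc. ring.
Qed.

Lemma div_step k : (Nat.div (S k + 1) 2 = Nat.div (k + 1) 2 \/ Nat.div (S k + 1) 2 = S (Nat.div (k + 1) 2))%nat.
Proof. pose proof (Nat.div_mod_eq (k+1) 2). pose proof (Nat.mod_upper_bound (k+1) 2 ltac:(lia)). pose proof (Nat.div_mod_eq (S k+1) 2). pose proof (Nat.mod_upper_bound (S k+1) 2 ltac:(lia)). lia. Qed.

Definition lab (k : nat) : nat * bool := (Nat.div (k + 1) 2, andb (Nat.ltb 0 k) (Nat.eqb (Nat.modulo k 2) 0)).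

Ltac dm k := pose proof (Nat.div_mod_eq (k+1) 2); pose proof (Nat.mod_upper_bound (k+1) 2 ltac:(lia));
  pose proof (Nat.div_mod_eq k 2); pose proof (Nat.mod_upper_bound k 2 ltac:(lia)).

Lemma lab_valid k : dtn_label_valid (lab k).
Proof.
  unfold dtn_label_valid, lab; cbn [fst snd]. intro H. dm k.
  destruct (Nat.ltb_spec 0 k); cbn [andb]; auto. exfalso; lia.
Qed.

Lemma lab_inj k1 k2 : lab k1 = lab k2 -> k1 = k2.
Proof.
  unfold lab. intro H. pose proof (f_equal fst H) as H1. pose proof (f_equal snd H) as H2. cbn [fst snd] in H1, H2. clear H. dm k1. dm k2.
  destruct (Nat.ltb_spec 0 k1), (Nat.ltb_spec 0 k2), (Nat.eqb_spec (k1 mod 2) 0), (Nat.eqb_spec (k2 mod 2) 0);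
    cbn [andb] in H2; try discriminate; lia.
Qed.

Lemma lab_surj l : dtn_label_valid l -> exists k, lab k = l.
Proof.
  destruct l as [j b]. unfold dtn_label_valid; simpl. intro Hv. unfold lab.
  destruct b.
  - assert (j <> 0)%nat by (intro e; specialize (Hv e); discriminate).
    exists (2 * j)%nat. dm (2*j)%nat.
    destruct (Nat.ltb_spec 0 (2*j)), (Nat.eqb_spec ((2*j) mod 2) 0); cbn [andb]; try (exfalso; lia).
    f_equal. lia.
  - destruct j as [|j].
    + exists 0%nat. reflexivity.
    + exists (2 * j + 1)%nat. dm (2*j+1)%nat.
      destruct (Nat.ltb_spec 0 (2*j+1)), (Nat.eqb_spec ((2*j+1) mod 2) 0); cbn [andb]; try (exfalso; lia).
      f_equal. lia.
Qed.

Theorem mainTheorem14 :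
  (forall (n m : nat) (jn : R), (n < m)%nat -> is_first_zero_J n jn ->
     forall L : R, L < jn ^ 2 -> sigma_n n L < sigma_n m L) /\
  (forall j0 : R, is_first_zero_J 0 j0 ->
     forall L : R, L < j0 ^ 2 ->
       lists_dtn_eigenvalues L (fun k : nat => sigma_n (Nat.div (k + 1) 2) L)).
Proof.
  split.
  - intros n m jn Hmn Hj L HL. apply (compare m n (jn^2/4)); auto.
    apply (F_pos_first n jn Hj). lra.
  - intros j0 Hj L HL. split.
    + intro k. destruct (div_step k) as [E|E]; rewrite E. lra.
      apply Rlt_le. apply (compare _ _ (j0^2/4)). lia. 2: lra.
      intros z Hz. destruct (Nat.eq_dec (Nat.div (k + 1) 2) 0) as [e|e].
      * rewrite e. apply (F_pos_first 0 j0 Hj). auto.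
      * apply (Fm_pos _ 0 (j0^2/4)). lia. apply (F_pos_first 0 j0 Hj). auto.
    + exists lab. split; [apply lab_valid|split; [apply lab_inj|split; [apply lab_surj|]]].
      intro k. reflexivity.
Qed.
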